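(* Let $f:\mathbb{N}_0^n\to[0,\infty)$ be subadditive, and extend it to $\mathbb{R}_0^n=[0,\infty)^n$ by $f(\boldsymbol r)=f(\lceil\boldsymbol r\rceil)$ (ceiling taken coordinatewise). Then for every $\boldsymbol r\in\mathbb{R}_0^n$ the limit $\hat f(\boldsymbol r)=\lim_{t\to\infty}f(t\boldsymbol r)/t$ (over real $t\to\infty$) exists and is finite, and $\hat f$ is positively homogeneous: $\hat f(\alpha\boldsymbol r)=\alpha\hat f(\boldsymbol r)$ for all $\alpha\ge0$.
   Context: A function $f:\mathbb{N}_0^n\to[0,\infty)$ is subadditive if $f(\boldsymbol k+\boldsymbol m)\le f(\boldsymbol k)+f(\boldsymbol m)$ for all $\boldsymbol k,\boldsymbol m\in\mathbb{N}_0^n$. *)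

(* Defs.v *)
From Stdlib Require Import Reals ZArith Arith.
Open Scope R_scope.

(* Index set {0,...,n-1}; points of N_0^n and R^n are functions on it. *)
Definition idx (n : nat) : Type := {i : nat | (i < n)%nat}.

Definition nonneg_fun {n : nat} (f : (idx n -> nat) -> R) : Prop :=
  forall k, 0 <= f k.

Definition subadditive {n : nat} (f : (idx n -> nat) -> R) : Prop :=
  forall k m : idx n -> nat, f (fun i => (k i + m i)%nat) <= f k + f m.

Definition Rceil (x : R) : Z := (- Int_part (- x))%Z.

Definition ceil_vec {n : nat} (r : idx n -> R) : idx n -> nat :=
  fun i => Z.to_nat (Rceil (r i)).

Definition fext {n : nat} (f : (idx n -> nat) -> R) (r : idx n -> R) : R :=
  f (ceil_vec r).

Definition nonneg_vec {n : nat} (r : idx n -> R) : Prop := forall i, 0 <= r i.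

Definition scale_vec {n : nat} (t : R) (r : idx n -> R) : idx n -> R :=
  fun i => t * r i.

Definition lim_at_infty (g : R -> R) (L : R) : Prop :=
  forall eps : R, eps > 0 -> exists T : R, forall t : R, t > T -> Rabs (g t - L) < eps.

(* Main.v *)
Require Import Defs.
From Stdlib Require Import Reals ZArith Arith.
From Stdlib Require Import Lra Lia Psatz.
From Stdlib Require Import FunctionalExtensionality ProofIrrelevance ClassicalEpsilon Classical.
Open Scope R_scope.

Lemma ceil_spec x : 0 <= x -> x <= INR (Z.to_nat (Rceil x)) < x + 1.
Proof.
  intros Hx. unfold Rceil, Int_part.
  destruct (archimed (- x)) as [H1 H2].
  assert (E : IZR (- (up (- x) - 1)) = 1 - IZR (up (-x))).
  { rewrite opp_IZR, minus_IZR. simpl. ring. }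
  assert (Hz : (0 <= - (up (- x) - 1))%Z).
  { apply le_IZR. rewrite E. lra. }
  rewrite INR_IZR_INZ, Z2Nat.id by exact Hz. rewrite E. lra.
Qed.

Lemma floor_ex y : 0 <= y -> exists q : nat, INR q <= y < INR q + 1.
Proof.
  intros Hy. destruct (base_Int_part y) as [H1 H2].
  assert (Hz : (0 <= Int_part y)%Z).
  { assert (-1 < Int_part y)%Z.
    { apply lt_IZR. replace (IZR (-1)) with (-1) by reflexivity. lra. }
    lia. }
  exists (Z.to_nat (Int_part y)). rewrite INR_IZR_INZ, Z2Nat.id by exact Hz. lra.
Qed.

Lemma fin_ub (n : nat) (h : idx n -> R) : exists M, forall i, h i <= M.
Proof.
  assert (H : forall m, exists M, forall i : idx n, (proj1_sig i < m)%nat -> h i <= M).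
  { induction m as [|m [M HM]].
    - exists 0. intros i Hi; lia.
    - destruct (lt_dec m n) as [Hm|Hm].
      + exists (Rmax M (h (exist _ m Hm))). intros [i Hi] Hlt; simpl in Hlt.
        destruct (Nat.eq_dec i m) as [->|Hne].
        * rewrite (proof_irrelevance _ Hi Hm). apply Rmax_r.
        * eapply Rle_trans; [apply (HM (exist _ i Hi)); simpl; lia| apply Rmax_l].
      + exists M. intros [i Hi] Hlt. apply HM. simpl. simpl in Hlt. lia. }
  destruct (H n) as [M HM]. exists M. intros i. apply HM. apply proj2_sig.
Qed.

Lemma f_mul n (f : (idx n -> nat) -> R) (Hsub : subadditive f) q v :
  f (fun i => (q * v i)%nat) <= f (fun _ => 0%nat) + INR q * f v.
Proof.
  induction q.
  - simpl. lra.
  - replace (fun i => (S q * v i)%nat) with (fun i => (q * v i + v i)%nat)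
      by (apply functional_extensionality; intros; lia).
    eapply Rle_trans; [apply Hsub|]. rewrite S_INR. lra.
Qed.

Definition ev n (m : nat) : idx n -> nat :=
  fun j => if Nat.eqb (proj1_sig j) m then 1%nat else 0%nat.

Fixpoint Bsum n (f : (idx n -> nat) -> R) (m : nat) : R :=
  match m with O => 0 | S m' => Bsum n f m' + f (fun _ => 0%nat) + f (ev n m') end.

Lemma Bsum_nn n f (Hnn : nonneg_fun f) m : 0 <= Bsum n f m.
Proof.
  induction m; simpl; [lra|].
  pose proof (Hnn (fun _ => 0%nat)); pose proof (Hnn (ev n m)); lra.
Qed.

Lemma bin_bound n f (Hnn : nonneg_fun f) (Hsub : subadditive f) (b : idx n -> nat)
  (Hb : forall j, (b j <= 1)%nat) : forall m,
  f (fun j => if Nat.ltb (proj1_sig j) m then b j else 0%nat) <= f (fun _ => 0%nat) + Bsum n f m.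
Proof.
  induction m.
  - simpl.
    replace (fun j : idx n => if Nat.ltb (proj1_sig j) 0 then b j else 0%nat) with (fun _ : idx n => 0%nat).
    + lra.
    + apply functional_extensionality; intros j. destruct (Nat.ltb_spec (proj1_sig j) 0); [lia|reflexivity].
  - set (u := fun j : idx n => if Nat.eqb (proj1_sig j) m then b j else 0%nat).
    replace (fun j : idx n => if Nat.ltb (proj1_sig j) (S m) then b j else 0%nat)
      with (fun j => ((if Nat.ltb (proj1_sig j) m then b j else 0) + u j)%nat).
    2:{ apply functional_extensionality; intros j. unfold u.
        destruct (Nat.ltb_spec (proj1_sig j) m); destruct (Nat.eqb_spec (proj1_sig j) m);
        destruct (Nat.ltb_spec (proj1_sig j) (S m)); lia. }
    eapply Rle_trans; [apply Hsub|].
    assert (Hu : f u <= f (fun _ => 0%nat) + f (ev n m)).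
    { pose proof (Hnn (fun _ => 0%nat)); pose proof (Hnn (ev n m)).
      destruct (lt_dec m n) as [Hm|Hm].
      - assert (Hj : forall j : idx n, proj1_sig j = m -> b j = b (exist _ m Hm)).
        { intros [j Hj] e. simpl in e. subst j. rewrite (proof_irrelevance _ Hj Hm). reflexivity. }
        destruct (b (exist _ m Hm)) as [|[|k]] eqn:Eb.
        + replace u with (fun _ : idx n => 0%nat). lra.
          apply functional_extensionality; intros j; unfold u.
          destruct (Nat.eqb_spec (proj1_sig j) m); [rewrite Hj by assumption; auto | auto].
        + replace u with (ev n m). lra.
          apply functional_extensionality; intros j; unfold u, ev.
          destruct (Nat.eqb_spec (proj1_sig j) m); [rewrite Hj by assumption; auto | auto].
        + specialize (Hb (exist _ m Hm)). lia.
      - replace u with (fun _ : idx n => 0%nat). lra.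
        apply functional_extensionality; intros [j Hj]; unfold u; simpl.
        destruct (Nat.eqb_spec j m); [lia|auto]. }
    simpl. lra.
Qed.

Definition Bc n (f : (idx n -> nat) -> R) := f (fun _ => 0%nat) + Bsum n f n.

Lemma bin_final n f (Hnn : nonneg_fun f) (Hsub : subadditive f) (b : idx n -> nat)
  (Hb : forall j, (b j <= 1)%nat) : f b <= Bc n f.
Proof.
  pose proof (bin_bound n f Hnn Hsub b Hb n) as H.
  replace (fun j : idx n => if Nat.ltb (proj1_sig j) n then b j else 0%nat) with b in H.
  - exact H.
  - apply functional_extensionality; intros [j Hj]; simpl.
    destruct (Nat.ltb_spec j n); [auto|lia].
Qed.

Lemma D_bound0 n f (Hnn : nonneg_fun f) (Hsub : subadditive f) : forall D (k : idx n -> nat),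
  f (fun j => Nat.min (k j) D) <= f (fun _ => 0%nat) + INR D * Bc n f.
Proof.
  induction D; intros k.
  - replace (fun j => Nat.min (k j) 0) with (fun _ : idx n => 0%nat).
    + simpl. lra.
    + apply functional_extensionality; intros j; lia.
  - replace (fun j => Nat.min (k j) (S D))
      with (fun j => (Nat.min (k j) D + (if Nat.ltb D (k j) then 1 else 0))%nat).
    2:{ apply functional_extensionality; intros j. destruct (Nat.ltb_spec D (k j)); lia. }
    eapply Rle_trans; [apply Hsub|].
    pose proof (IHD k).
    assert (f (fun j => if Nat.ltb D (k j) then 1%nat else 0%nat) <= Bc n f).
    { apply bin_final; auto. intros j. destruct (Nat.ltb D (k j)); lia. }
    rewrite S_INR. lra.
Qed.

Lemma D_bound n f (Hnn : nonneg_fun f) (Hsub : subadditive f) D (k : idx n -> nat) :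
  (forall j, (k j <= D)%nat) -> f k <= f (fun _ => 0%nat) + INR D * Bc n f.
Proof.
  intros Hk. pose proof (D_bound0 n f Hnn Hsub D k) as H.
  replace (fun j => Nat.min (k j) D) with k in H; auto.
  apply functional_extensionality; intros j. specialize (Hk j). lia.
Qed.

Lemma decomp n f (Hnn : nonneg_fun f) (Hsub : subadditive f) (r : idx n -> R)
  (M lam : R) (Hr : forall i, 0 <= r i <= M) (HM0 : 0 <= M) (Hlam1 : 1 <= lam)
  (Hlam : forall i, 0 < r i -> / r i <= lam) (s t : R) (Hs : 1 <= s) (Ht : s + lam <= t) :
  f (ceil_vec (scale_vec t r)) / t <=
    f (ceil_vec (scale_vec s r)) / s + (M * lam * Bc n f) / s
    + (2 * f (fun _ => 0%nat) + (M * s + 2) * Bc n f) / t.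
Proof.
  set (y := t / (s + lam)).
  assert (Hy0 : 0 <= y) by (unfold y; left; apply Rdiv_lt_0_compat; lra).
  assert (Hty : t = y * (s + lam)) by (unfold y; field; lra).
  destruct (floor_ex y Hy0) as [q [Hq1 Hq2]].
  pose proof (pos_INR q) as Hq0.
  set (cs := ceil_vec (scale_vec s r)). set (ct := ceil_vec (scale_vec t r)).
  assert (Hcs : forall i, s * r i <= INR (cs i) < s * r i + 1).
  { intros i. apply ceil_spec. specialize (Hr i). nra. }
  assert (Hct : forall i, t * r i <= INR (ct i) < t * r i + 1).
  { intros i. apply ceil_spec. specialize (Hr i). nra. }
  assert (Hle : forall i, (q * cs i <= ct i)%nat).
  { intros i. apply INR_le. rewrite mult_INR.
    destruct (Hcs i) as [A1 A2]. destruct (Hct i) as [B1 B2]. pose proof (Hr i) as [R0 R1].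
    destruct (Req_dec (r i) 0) as [E|E].
    - assert (cs i = 0%nat).
      { destruct (cs i) eqn:Ec; auto. rewrite S_INR in A2. pose proof (pos_INR n0). rewrite E in A2. lra. }
      rewrite H. simpl. rewrite Rmult_0_r. apply pos_INR.
    - assert (Rp : 0 < r i) by lra.
      pose proof (Hlam i Rp) as HL.
      assert (lam * r i >= 1).
      { assert (/ r i * r i = 1) by (field; lra). nra. }
      assert (INR q * (s + lam) <= t) by nra.
      nra. }
  set (d := fun i => (ct i - q * cs i)%nat).
  set (X := M * (t - INR q * s) + 1).
  assert (HX0 : 0 <= t - INR q * s) by nra.
  assert (HX : 0 <= X) by (unfold X; nra).
  pose proof (ceil_spec X HX) as [HD1 HD2].
  set (D := Z.to_nat (Rceil X)) in *.
  assert (Hd : forall i, (d i <= D)%nat).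
  { intros i. apply INR_le. unfold d. rewrite minus_INR by apply Hle. rewrite mult_INR.
    destruct (Hcs i) as [A1 A2]. destruct (Hct i) as [B1 B2]. pose proof (Hr i) as [R0 R1].
    assert (INR q * (s * r i) <= INR q * INR (cs i)) by nra.
    assert (r i * (t - INR q * s) <= M * (t - INR q * s)) by nra.
    unfold X in HD1. nra. }
  assert (Hct_eq : ct = fun i => (q * cs i + d i)%nat).
  { apply functional_extensionality; intros i. unfold d. pose proof (Hle i). lia. }
  pose proof (D_bound n f Hnn Hsub D d Hd) as Hfd.
  pose proof (f_mul n f Hsub q cs) as Hfq.
  pose proof (Hsub (fun i => (q * cs i)%nat) d) as Hs1.
  cbv beta in Hs1. rewrite <- Hct_eq in Hs1.
  pose proof (Hnn cs) as Hfcs. pose proof (Hnn (fun _ => 0%nat)) as Hf0.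
  assert (HB : 0 <= Bc n f) by (unfold Bc; pose proof (Bsum_nn n f Hnn n); lra).
  assert (HtX : t - INR q * s <= y * lam + s) by nra.
  assert (HDB : INR D * Bc n f <= (M * (y * lam + s) + 2) * Bc n f).
  { apply Rmult_le_compat_r; auto. unfold X in HD2. nra. }
  assert (Hmain : f ct <= 2 * f (fun _ => 0%nat) + y * f cs + (M * (y * lam + s) + 2) * Bc n f).
  { assert (INR q * f cs <= y * f cs) by nra. lra. }
  assert (Hyz : y <= t / s).
  { unfold y, Rdiv. apply Rmult_le_compat_l; [lra|]. apply Rinv_le_contravar; lra. }
  assert (Hmain2 : f ct <= t * (f cs / s + M * lam * Bc n f / s) + (2 * f (fun _ => 0%nat) + (M * s + 2) * Bc n f)).
  { replace (t * (f cs / s + M * lam * Bc n f / s)) with (t / s * f cs + t / s * (M * lam * Bc n f)) by (field; lra).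
    assert (0 <= M * lam * Bc n f) by (apply Rmult_le_pos; nra).
    nra. }
  apply Rmult_le_reg_r with t; [lra|].
  replace ((f cs / s + M * lam * Bc n f / s + (2 * f (fun _ => 0%nat) + (M * s + 2) * Bc n f) / t) * t)
    with (t * (f cs / s + M * lam * Bc n f / s) + (2 * f (fun _ => 0%nat) + (M * s + 2) * Bc n f)) by (field; lra).
  replace (f ct / t * t) with (f ct) by (field; lra).
  exact Hmain2.
Qed.

Lemma divlt a e t : 0 < e -> 0 < t -> a / e < t -> a / t < e.
Proof.
  intros He Ht H.
  assert (a < t * e).
  { apply Rmult_lt_compat_r with (r := e) in H; auto.
    replace (a / e * e) with a in H by (field; lra). exact H. }
  apply Rmult_lt_reg_r with t; auto.
  replace (a / t * t) with a by (field; lra). lra.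
Qed.

Lemma exists_lim n f (Hnn : nonneg_fun f) (Hsub : subadditive f) (r : idx n -> R)
  (Hr : nonneg_vec r) : exists L, lim_at_infty (fun t => fext f (scale_vec t r) / t) L.
Proof.
  destruct (fin_ub n r) as [M0 HM0]. set (M := Rmax M0 0).
  destruct (fin_ub n (fun i => if Rlt_dec 0 (r i) then / r i else 0)) as [l0 Hl0].
  set (lam := Rmax l0 1).
  assert (HMr : forall i, 0 <= r i <= M).
  { intros i. split; [apply Hr|]. eapply Rle_trans; [apply HM0|apply Rmax_l]. }
  assert (HM : 0 <= M) by apply Rmax_r.
  assert (Hlam1 : 1 <= lam) by apply Rmax_r.
  assert (Hlam : forall i, 0 < r i -> / r i <= lam).
  { intros i Hi. specialize (Hl0 i). destruct (Rlt_dec 0 (r i)); [|contradiction].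
    eapply Rle_trans; [apply Hl0|apply Rmax_l]. }
  set (g := fun t => fext f (scale_vec t r) / t).
  set (A := M * lam * Bc n f).
  assert (HB : 0 <= Bc n f) by (unfold Bc; pose proof (Bsum_nn n f Hnn n); pose proof (Hnn (fun _ => 0%nat)); lra).
  assert (HA : 0 <= A) by (unfold A; apply Rmult_le_pos; [apply Rmult_le_pos|]; lra).
  assert (Hg0 : forall t, 0 < t -> 0 <= g t).
  { intros t Ht. unfold g, Rdiv. apply Rmult_le_pos; [apply Hnn|left; apply Rinv_0_lt_compat; lra]. }
  assert (Hh0 : forall s, 1 <= s -> 0 <= g s + A / s).
  { intros s Hs. pose proof (Hg0 s ltac:(lra)).
    assert (0 <= A / s) by (unfold Rdiv; apply Rmult_le_pos; [lra|left; apply Rinv_0_lt_compat; lra]).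
    lra. }
  set (E := fun y => exists s, 1 <= s /\ y = - (g s + A / s)).
  assert (Hb : bound E).
  { exists 0. intros y [s [Hs ->]]. pose proof (Hh0 s Hs). lra. }
  assert (Hne : exists y, E y) by (exists (- (g 1 + A / 1)); exists 1; split; [lra|reflexivity]).
  destruct (completeness E Hb Hne) as [m [Hm1 Hm2]].
  exists (- m). intros eps Heps.
  assert (HL1 : forall s, 1 <= s -> - m <= g s + A / s).
  { intros s Hs. assert (- (g s + A / s) <= m) by (apply Hm1; exists s; auto). lra. }
  assert (HL2 : exists s, 1 <= s /\ g s + A / s < - m + eps / 2).
  { apply NNPP. intros Hno.
    assert (m <= m - eps / 2).
    { apply Hm2. intros y [s [Hs ->]].
      assert (~ (g s + A / s < - m + eps / 2)) by (intros Hc; apply Hno; exists s; auto).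
      apply Rnot_lt_le in H. lra. }
    lra. }
  destruct HL2 as [s [Hs Hsm]].
  set (Es := 2 * f (fun _ => 0%nat) + (M * s + 2) * Bc n f).
  exists (Rmax (s + lam) (Rmax (Es / (eps / 2)) (Rmax 1 (A / eps)))).
  intros t Ht.
  assert (T1 : s + lam < t) by (eapply Rle_lt_trans; [apply Rmax_l|exact Ht]).
  assert (T2 : Es / (eps / 2) < t) by (eapply Rle_lt_trans; [eapply Rle_trans; [apply Rmax_l|apply Rmax_r]|exact Ht]).
  assert (T3 : 1 < t) by (eapply Rle_lt_trans; [eapply Rle_trans; [apply Rmax_l|eapply Rle_trans; [apply Rmax_r|apply Rmax_r]]|exact Ht]).
  assert (T4 : A / eps < t) by (eapply Rle_lt_trans; [eapply Rle_trans; [apply Rmax_r|eapply Rle_trans; [apply Rmax_r|apply Rmax_r]]|exact Ht]).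
  assert (U1 : Es / t < eps / 2) by (apply divlt; lra).
  assert (U2 : A / t < eps) by (apply divlt; lra).
  assert (Hup : g t <= g s + A / s + Es / t).
  { unfold g, fext, A, Es. apply decomp with (M := M) (lam := lam); auto; lra. }
  pose proof (HL1 t ltac:(lra)).
  apply Rabs_def1; lra.
Qed.

Lemma lim_unique g L1 L2 : lim_at_infty g L1 -> lim_at_infty g L2 -> L1 = L2.
Proof.
  intros H1 H2. destruct (Req_dec L1 L2) as [|Hne]; auto.
  set (e := Rabs (L1 - L2) / 2).
  assert (He : 0 < e) by (unfold e; apply Rdiv_lt_0_compat; [apply Rabs_pos_lt; lra|lra]).
  destruct (H1 e He) as [T1 HT1]. destruct (H2 e He) as [T2 HT2].
  set (t := Rmax T1 T2 + 1).
  assert (t > T1) by (unfold t; pose proof (Rmax_l T1 T2); lra).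
  assert (t > T2) by (unfold t; pose proof (Rmax_r T1 T2); lra).
  pose proof (HT1 t H) as A1. pose proof (HT2 t H0) as A2.
  apply Rabs_def2 in A1. apply Rabs_def2 in A2.
  unfold e in *. unfold Rabs in *. destruct (Rcase_abs (L1 - L2)); lra.
Qed.

Lemma lim_scale g h L a : 0 < a -> (forall t, 0 < t -> h t = a * g (a * t)) ->
  lim_at_infty g L -> lim_at_infty h (a * L).
Proof.
  intros Ha Hh Hg eps Heps.
  destruct (Hg (eps / a) ltac:(apply Rdiv_lt_0_compat; lra)) as [T HT].
  exists (Rmax 0 (T / a)). intros t Ht.
  assert (0 < t) by (pose proof (Rmax_l 0 (T / a)); lra).
  assert (T / a < t) by (pose proof (Rmax_r 0 (T / a)); lra).
  assert (a * t > T).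
  { apply Rmult_lt_compat_l with (r := a) in H0; auto.
    replace (a * (T / a)) with T in H0 by (field; lra). lra. }
  specialize (HT _ H1). rewrite Hh by auto.
  replace (a * g (a * t) - a * L) with (a * (g (a * t) - L)) by ring.
  rewrite Rabs_mult, Rabs_pos_eq by lra.
  apply Rmult_lt_compat_l with (r := a) in HT; auto.
  replace (a * (eps / a)) with eps in HT by (field; lra). exact HT.
Qed.

Lemma lim_const_div c : lim_at_infty (fun t => c / t) 0.
Proof.
  intros eps Heps. exists (Rmax 0 (Rabs c / eps)). intros t Ht.
  assert (0 < t) by (pose proof (Rmax_l 0 (Rabs c / eps)); lra).
  assert (Rabs c / eps < t) by (pose proof (Rmax_r 0 (Rabs c / eps)); lra).
  rewrite Rminus_0_r. unfold Rdiv. rewrite Rabs_mult, Rabs_inv, (Rabs_pos_eq t) by lra.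
  apply divlt; auto.
Qed.

Theorem mainTheorem9 (n : nat) (f : (idx n -> nat) -> R)
  (Hnn : nonneg_fun f) (Hsub : subadditive f) :
  exists fhat : (idx n -> R) -> R,
    (forall r : idx n -> R, nonneg_vec r ->
       lim_at_infty (fun t => fext f (scale_vec t r) / t) (fhat r)) /\
    (forall (alpha : R) (r : idx n -> R), 0 <= alpha -> nonneg_vec r ->
       fhat (scale_vec alpha r) = alpha * fhat r).
Proof.
  set (G := fun r t => fext f (scale_vec t r) / t).
  set (fhat := fun r => match excluded_middle_informative (exists L, lim_at_infty (G r) L) with
                        | left H => proj1_sig (constructive_indefinite_description _ H)
                        | right _ => 0 end).
  assert (Hspec : forall r, nonneg_vec r -> lim_at_infty (G r) (fhat r)).
  { intros r Hr. unfold fhat. destruct excluded_middle_informative as [H|H].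
    - destruct (constructive_indefinite_description _ H) as [L HL]. exact HL.
    - exfalso. apply H. apply exists_lim; auto. }
  exists fhat. split; [exact Hspec|].
  intros a r Ha Hr.
  assert (Hr' : nonneg_vec (scale_vec a r)).
  { intros i. unfold scale_vec. apply Rmult_le_pos; auto. }
  destruct Ha as [Ha|Ha].
  - apply (lim_unique (G (scale_vec a r))); [apply Hspec; auto|].
    apply lim_scale with (g := G r); auto.
    intros t Ht. unfold G.
    replace (scale_vec t (scale_vec a r)) with (scale_vec (a * t) r).
    + field. lra.
    + apply functional_extensionality; intros i. unfold scale_vec. ring.
  - subst a. rewrite Rmult_0_l.
    apply (lim_unique (G (scale_vec 0 r))); [apply Hspec; auto|].
    replace (G (scale_vec 0 r)) with (fun t => fext f (fun _ => 0) / t).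
    + apply lim_const_div.
    + apply functional_extensionality; intros t. unfold G.
      f_equal. f_equal. apply functional_extensionality; intros i. unfold scale_vec. ring.
Qed.
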